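(* Let $(X,*,\circ)$ be a left skew brace and $R,S$ congruences on $X$. The following are equivalent: (1) $[I_R,I_S]=0$; (2) every element of $I_R$ commutes with every element of $I_S$ in $(X,* )$, every element of $I_R$ commutes with every element of $I_S$ in $(X,\circ)$, and $x*y^{-*}*z=x\circ y^{-\circ}\circ z$ for all $x,y,z\in X$ with $x\,R\,y$ and $y\,S\,z$; (3) $[R,S]=0$. In particular the category $\mathsf{SKB}$ of left skew braces satisfies (Huq=Smith).
   Context: A (left) skew brace is a triple $(A,*,\circ)$ with $(A,* )$ and $(A,\circ)$ groups such that $a\circ(b*c)=(a\circ b)*a^{-*}*(a\circ c)$ for all $a,b,c\in A$; $a^{-*}$, $a^{-\circ}$ denote inverses in $(A,* )$, $(A,\circ)$; the two groups share the identity $1$. Morphisms are maps that are homomorphisms for both operations; products are componentwise. A congruence on $X$ is an equivalence relation $R\subseteq X\times X$ that is a sub-skew brace of $X\times X$; $I_R=\{x\in X: x\,R\,1\}$. For sub-skew braces $U,V$ of $X$, $[U,V]=0$ means there exists a skew brace morphism $\varphi\colon U\times V\to X$ with $\varphi(u,1)=u$, $\varphi(1,v)=v$. For congruences $R,S$, let $R\times_X S=\{(x,y,z): xRy,\ ySz\}$ (a sub-skew brace of $X^3$); $[R,S]=0$ means there exists a skew brace morphism $p\colon R\times_XS\to X$ with $p(x,y,y)=x$ whenever $xRy$ and $p(y,y,z)=z$ whenever $ySz$. (Huq=Smith) means: for every skew brace $X$ and all congruences $R,S$ on $X$, $[I_R,I_S]=0$ implies $[R,S]=0$. *)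

(* Defs.v *)
From Stdlib Require Import ProofIrrelevance.

Set Implicit Arguments.
Unset Strict Implicit.

(** A (left) skew brace (A, *, o): two groups on the same carrier sharing
    the identity, with  a o (b * c) = (a o b) * a^{-*} * (a o c). *)
Record skew_brace := SkewBrace {
  sb_car :> Type;
  sb_add : sb_car -> sb_car -> sb_car;
  sb_mul : sb_car -> sb_car -> sb_car;
  sb_one : sb_car;
  sb_addinv : sb_car -> sb_car;
  sb_mulinv : sb_car -> sb_car;
  sb_addA : forall a b c, sb_add a (sb_add b c) = sb_add (sb_add a b) c;
  sb_add1l : forall a, sb_add sb_one a = a;
  sb_add1r : forall a, sb_add a sb_one = a;
  sb_addVl : forall a, sb_add (sb_addinv a) a = sb_one;
  sb_addVr : forall a, sb_add a (sb_addinv a) = sb_one;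
  sb_mulA : forall a b c, sb_mul a (sb_mul b c) = sb_mul (sb_mul a b) c;
  sb_mul1l : forall a, sb_mul sb_one a = a;
  sb_mul1r : forall a, sb_mul a sb_one = a;
  sb_mulVl : forall a, sb_mul (sb_mulinv a) a = sb_one;
  sb_mulVr : forall a, sb_mul a (sb_mulinv a) = sb_one;
  sb_brace : forall a b c,
    sb_mul a (sb_add b c) = sb_add (sb_add (sb_mul a b) (sb_addinv a)) (sb_mul a c)
}.

Arguments sb_add {s}.
Arguments sb_mul {s}.
Arguments sb_one {s}.
Arguments sb_addinv {s}.
Arguments sb_mulinv {s}.

Definition sb_hom (A B : skew_brace) (f : A -> B) : Prop :=
  forall a b, f (sb_add a b) = sb_add (f a) (f b) /\
              f (sb_mul a b) = sb_mul (f a) (f b).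

Definition prod_sb (A B : skew_brace) : skew_brace.
Proof.
refine (@SkewBrace (A * B)%type
  (fun p q => (sb_add (fst p) (fst q), sb_add (snd p) (snd q)))
  (fun p q => (sb_mul (fst p) (fst q), sb_mul (snd p) (snd q)))
  (sb_one, sb_one)
  (fun p => (sb_addinv (fst p), sb_addinv (snd p)))
  (fun p => (sb_mulinv (fst p), sb_mulinv (snd p)))
  _ _ _ _ _ _ _ _ _ _ _);
 intros; simpl;
 repeat match goal with p : (_ * _)%type |- _ => destruct p end; simpl;
 first [ rewrite !sb_addA | rewrite !sb_add1l | rewrite !sb_add1r
       | rewrite !sb_addVl | rewrite !sb_addVr | rewrite !sb_mulA
       | rewrite !sb_mul1l | rewrite !sb_mul1r | rewrite !sb_mulVl
       | rewrite !sb_mulVr | rewrite !sb_brace ]; reflexivity.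
Defined.

Record is_sub (A : skew_brace) (P : A -> Prop) : Prop := IsSub {
  sub_one : P sb_one;
  sub_add : forall a b, P a -> P b -> P (sb_add a b);
  sub_mul : forall a b, P a -> P b -> P (sb_mul a b);
  sub_addinv : forall a, P a -> P (sb_addinv a);
  sub_mulinv : forall a, P a -> P (sb_mulinv a)
}.

Arguments is_sub : clear implicits.
Arguments sub_one {A P}.
Arguments sub_add {A P} _ {a b}.
Arguments sub_mul {A P} _ {a b}.
Arguments sub_addinv {A P} _ {a}.
Arguments sub_mulinv {A P} _ {a}.

Lemma sig_eq_val (T : Type) (P : T -> Prop) (x y : {t | P t}) :
  proj1_sig x = proj1_sig y -> x = y.
Proof.
destruct x as [x hx], y as [y hy]; simpl; intros ->.
f_equal; apply proof_irrelevance.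
Qed.

Definition sub_sb (A : skew_brace) (P : A -> Prop) (h : is_sub A P) : skew_brace.
Proof.
refine (@SkewBrace {x : A | P x}
  (fun x y => exist _ (sb_add (proj1_sig x) (proj1_sig y))
                 (sub_add h (proj2_sig x) (proj2_sig y)))
  (fun x y => exist _ (sb_mul (proj1_sig x) (proj1_sig y))
                 (sub_mul h (proj2_sig x) (proj2_sig y)))
  (exist _ sb_one (sub_one h))
  (fun x => exist _ (sb_addinv (proj1_sig x)) (sub_addinv h (proj2_sig x)))
  (fun x => exist _ (sb_mulinv (proj1_sig x)) (sub_mulinv h (proj2_sig x)))
  _ _ _ _ _ _ _ _ _ _ _);
 intros; apply sig_eq_val; simpl;
 first [ apply sb_addA | apply sb_add1l | apply sb_add1r
       | apply sb_addVl | apply sb_addVr | apply sb_mulA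
       | apply sb_mul1l | apply sb_mul1r | apply sb_mulVl
       | apply sb_mulVr | apply sb_brace ].
Defined.

Definition congruence (X : skew_brace) (R : X -> X -> Prop) : Prop :=
  (forall x, R x x) /\ (forall x y, R x y -> R y x) /\
  (forall x y z, R x y -> R y z -> R x z) /\
  is_sub (prod_sb X X) (fun p => R (fst p) (snd p)).

Definition I_of (X : skew_brace) (R : X -> X -> Prop) : X -> Prop :=
  fun x => R x sb_one.

Definition huq_comm (X : skew_brace) (U V : X -> Prop) : Prop :=
  exists (hU : is_sub X U) (hV : is_sub X V)
         (phi : prod_sb (sub_sb hU) (sub_sb hV) -> X),
    sb_hom phi /\
    (forall u : sub_sb hU, phi (u, sb_one) = proj1_sig u) /\
    (forall v : sub_sb hV, phi (sb_one, v) = proj1_sig v).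

Definition RxS (X : skew_brace) (R S : X -> X -> Prop)
  : prod_sb (prod_sb X X) X -> Prop :=
  fun t => R (fst (fst t)) (snd (fst t)) /\ S (snd (fst t)) (snd t).

Definition smith_comm (X : skew_brace) (R S : X -> X -> Prop) : Prop :=
  exists (h : is_sub (prod_sb (prod_sb X X) X) (RxS R S))
         (p : sub_sb h -> X),
    sb_hom p /\
    (forall t : sub_sb h,
       snd (fst (proj1_sig t)) = snd (proj1_sig t) ->
       p t = fst (fst (proj1_sig t))) /\
    (forall t : sub_sb h,
       fst (fst (proj1_sig t)) = snd (fst (proj1_sig t)) ->
       p t = snd (proj1_sig t)).

Definition cond2 (X : skew_brace) (R S : X -> X -> Prop) : Prop :=
  (forall a b, I_of R a -> I_of S b -> sb_add a b = sb_add b a) /\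
  (forall a b, I_of R a -> I_of S b -> sb_mul a b = sb_mul b a) /\
  (forall x y z, R x y -> S y z ->
     sb_add (sb_add x (sb_addinv y)) z = sb_mul (sb_mul x (sb_mulinv y)) z).

Definition huq_eq_smith : Prop :=
  forall (X : skew_brace) (R S : X -> X -> Prop),
    congruence R -> congruence S ->
    huq_comm (I_of R) (I_of S) -> smith_comm R S.

(* Main.v *)
Require Import Defs.
Set Implicit Arguments.
Unset Strict Implicit.

Section G.
Variable X : skew_brace.
Local Infix "⊕" := (@sb_add X) (at level 50, left associativity).
Local Infix "⊙" := (@sb_mul X) (at level 40, left associativity).

Lemma addinv_uniq (a w : X) : a ⊕ w = sb_one -> w = sb_addinv a.
Proof.
intro H. rewrite <- (sb_add1l w), <- (sb_addVl a), <- sb_addA, H, sb_add1r. reflexivity.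
Qed.
Lemma mulinv_uniq (a w : X) : a ⊙ w = sb_one -> w = sb_mulinv a.
Proof.
intro H. rewrite <- (sb_mul1l w), <- (sb_mulVl a), <- sb_mulA, H, sb_mul1r. reflexivity.
Qed.
Lemma addinv1 : sb_addinv (@sb_one X) = sb_one.
Proof. symmetry; apply addinv_uniq, sb_add1l. Qed.
Lemma mulinv1 : sb_mulinv (@sb_one X) = sb_one.
Proof. symmetry; apply mulinv_uniq, sb_mul1l. Qed.
Lemma addinvD (a b : X) : sb_addinv (a ⊕ b) = sb_addinv b ⊕ sb_addinv a.
Proof.
symmetry; apply addinv_uniq.
rewrite !sb_addA, <- (sb_addA a b), sb_addVr, sb_add1r, sb_addVr. reflexivity.
Qed.
Lemma mulinvM (a b : X) : sb_mulinv (a ⊙ b) = sb_mulinv b ⊙ sb_mulinv a.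
Proof.
symmetry; apply mulinv_uniq.
rewrite !sb_mulA, <- (sb_mulA a b), sb_mulVr, sb_mul1r, sb_mulVr. reflexivity.
Qed.
Lemma addKV (u v w : X) : u ⊕ sb_addinv v ⊕ (v ⊕ w) = u ⊕ w.
Proof. rewrite sb_addA, <- (sb_addA u), sb_addVl, sb_add1r. reflexivity. Qed.
Lemma mulKV (u v w : X) : u ⊙ sb_mulinv v ⊙ (v ⊙ w) = u ⊙ w.
Proof. rewrite sb_mulA, <- (sb_mulA u), sb_mulVl, sb_mul1r. reflexivity. Qed.

Lemma key (x y b : X) : (x ⊙ sb_mulinv y) ⊕ b = (x ⊙ sb_mulinv y) ⊙ b ->
  x ⊕ sb_addinv y ⊕ (y ⊕ b) = x ⊙ sb_mulinv y ⊙ (y ⊕ b).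
Proof.
intro H. rewrite addKV, sb_brace, <- H, addKV, <- sb_mulA, sb_mulVl, sb_mul1r.
reflexivity.
Qed.

Variable R : X -> X -> Prop.
Hypothesis hR : congruence R.

Lemma c_refl x : R x x. Proof. apply (proj1 hR). Qed.
Lemma c_sym x y : R x y -> R y x. Proof. apply (proj1 (proj2 hR)). Qed.
Lemma c_add x y x' y' : R x y -> R x' y' -> R (x ⊕ x') (y ⊕ y').
Proof.
destruct hR as [_ [_ [_ hs]]]. intros H H'.
exact (sub_add hs (a:=(x,y)) (b:=(x',y')) H H').
Qed.
Lemma c_mul x y x' y' : R x y -> R x' y' -> R (x ⊙ x') (y ⊙ y').
Proof.
destruct hR as [_ [_ [_ hs]]]. intros H H'.
exact (sub_mul hs (a:=(x,y)) (b:=(x',y')) H H').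
Qed.
Lemma c_addinv x y : R x y -> R (sb_addinv x) (sb_addinv y).
Proof.
destruct hR as [_ [_ [_ hs]]]. intros H.
exact (sub_addinv hs (a:=(x,y)) H).
Qed.
Lemma c_mulinv x y : R x y -> R (sb_mulinv x) (sb_mulinv y).
Proof.
destruct hR as [_ [_ [_ hs]]]. intros H.
exact (sub_mulinv hs (a:=(x,y)) H).
Qed.

Lemma I_sub : is_sub X (I_of R).
Proof.
unfold I_of; constructor.
- apply c_refl.
- intros a b Ha Hb. rewrite <- (sb_add1l sb_one). apply c_add; auto.
- intros a b Ha Hb. rewrite <- (sb_mul1l sb_one). apply c_mul; auto.
- intros a Ha. rewrite <- addinv1. apply c_addinv; auto.
- intros a Ha. rewrite <- mulinv1. apply c_mulinv; auto.
Qed.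

Lemma I_addl x y : R x y -> I_of R (x ⊕ sb_addinv y).
Proof. intro H. unfold I_of. rewrite <- (sb_addVr y). apply c_add; auto using c_refl. Qed.
Lemma I_mull x y : R x y -> I_of R (x ⊙ sb_mulinv y).
Proof. intro H. unfold I_of. rewrite <- (sb_mulVr y). apply c_mul; auto using c_refl. Qed.
Lemma I_addr y z : R y z -> I_of R (sb_addinv y ⊕ z).
Proof. intro H. unfold I_of. apply c_sym. rewrite <- (sb_addVl y). apply c_add; auto using c_refl. Qed.
Lemma I_mulr y z : R y z -> I_of R (sb_mulinv y ⊙ z).
Proof. intro H. unfold I_of. apply c_sym. rewrite <- (sb_mulVl y). apply c_mul; auto using c_refl. Qed.
End G.

Definition cond2' (X : skew_brace) (R S : X -> X -> Prop) : Prop :=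
  forall a b, I_of R a -> I_of S b ->
    sb_add a b = sb_add b a /\ sb_mul a b = sb_mul b a /\ sb_add a b = sb_mul a b.

Lemma c2_iff (X : skew_brace) (R S : X -> X -> Prop) :
  congruence R -> congruence S -> (cond2 R S <-> cond2' R S).
Proof.
intros hR hS. split.
- intros [H1 [H2 H3]] a b Ha Hb. split; [auto|split; [auto|]].
  assert (Hb' : S sb_one b) by (apply c_sym; auto).
  specialize (H3 a sb_one b Ha Hb').
  rewrite addinv1, mulinv1, sb_add1r, sb_mul1r in H3. exact H3.
- intros H. split; [|split].
  + intros a b Ha Hb. apply (H a b Ha Hb).
  + intros a b Ha Hb. apply (H a b Ha Hb).
  + intros x y z Hxy Hyz.
    assert (E : sb_add y (sb_add (sb_addinv y) z) = z).
    { rewrite sb_addA, sb_addVr, sb_add1l. reflexivity. }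
    rewrite <- E. apply key.
    apply (H _ _ (I_mull hR Hxy) (I_addr hS Hyz)).
Qed.

Lemma huq_iff (X : skew_brace) (R S : X -> X -> Prop) :
  congruence R -> congruence S -> (huq_comm (I_of R) (I_of S) <-> cond2' R S).
Proof.
intros hR hS. split.
- intros [hU [hV [phi [hom [h1 h2]]]]] a b Ha Hb.
  set (ua := exist _ a Ha : sub_sb hU).
  set (vb := exist _ b Hb : sub_sb hV).
  assert (E1 : phi (ua, vb) = sb_add a b).
  { transitivity (sb_add (phi (ua, sb_one)) (phi (sb_one, vb))); [| rewrite h1, h2; reflexivity].
    rewrite <- (proj1 (hom _ _)). f_equal.
    simpl. f_equal; apply sig_eq_val; simpl; [symmetry; apply sb_add1r | symmetry; apply sb_add1l]. }
  assert (E2 : phi (ua, vb) = sb_add b a).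
  { transitivity (sb_add (phi (sb_one, vb)) (phi (ua, sb_one))); [| rewrite h1, h2; reflexivity].
    rewrite <- (proj1 (hom _ _)). f_equal.
    simpl. f_equal; apply sig_eq_val; simpl; [symmetry; apply sb_add1l | symmetry; apply sb_add1r]. }
  assert (E3 : phi (ua, vb) = sb_mul a b).
  { transitivity (sb_mul (phi (ua, sb_one)) (phi (sb_one, vb))); [| rewrite h1, h2; reflexivity].
    rewrite <- (proj2 (hom _ _)). f_equal.
    simpl. f_equal; apply sig_eq_val; simpl; [symmetry; apply sb_mul1r | symmetry; apply sb_mul1l]. }
  assert (E4 : phi (ua, vb) = sb_mul b a).
  { transitivity (sb_mul (phi (sb_one, vb)) (phi (ua, sb_one))); [| rewrite h1, h2; reflexivity].
    rewrite <- (proj2 (hom _ _)). f_equal.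
    simpl. f_equal; apply sig_eq_val; simpl; [symmetry; apply sb_mul1l | symmetry; apply sb_mul1r]. }
  split; [congruence | split; congruence].
- intros H. exists (I_sub hR), (I_sub hS).
  exists (fun p : prod_sb (sub_sb (I_sub hR)) (sub_sb (I_sub hS)) =>
            sb_add (proj1_sig (fst p)) (proj1_sig (snd p))).
  split; [|split].
  + intros [[u Hu] [v Hv]] [[u' Hu'] [v' Hv']]. simpl. split.
    * rewrite !sb_addA. f_equal. rewrite <- !sb_addA. f_equal.
      apply (H _ _ Hu' Hv).
    * rewrite (proj2 (proj2 (H _ _ Hu Hv))), (proj2 (proj2 (H _ _ Hu' Hv'))).
      assert (Hu2 : I_of R (sb_mul u u')) by (apply (sub_mul (I_sub hR)); auto).
      assert (Hv2 : I_of S (sb_mul v v')) by (apply (sub_mul (I_sub hS)); auto).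
      rewrite (proj2 (proj2 (H _ _ Hu2 Hv2))).
      rewrite !sb_mulA. f_equal. rewrite <- !sb_mulA. f_equal.
      apply (proj1 (proj2 (H _ _ Hu' Hv))).
  + intros u. simpl. apply sb_add1r.
  + intros v. simpl. apply sb_add1l.
Qed.

Lemma RxS_sub (X : skew_brace) (R S : X -> X -> Prop) :
  congruence R -> congruence S -> is_sub (prod_sb (prod_sb X X) X) (RxS R S).
Proof.
intros hR hS. unfold RxS. constructor.
- simpl. split; apply c_refl; auto.
- intros [[x y] z] [[x' y'] z'] [H1 H2] [H3 H4]. simpl in *.
  split; apply c_add; auto.
- intros [[x y] z] [[x' y'] z'] [H1 H2] [H3 H4]. simpl in *.
  split; apply c_mul; auto.
- intros [[x y] z] [H1 H2]. simpl in *. split; apply c_addinv; auto.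
- intros [[x y] z] [H1 H2]. simpl in *. split; apply c_mulinv; auto.
Qed.

Lemma c2_smith (X : skew_brace) (R S : X -> X -> Prop) :
  congruence R -> congruence S -> cond2 R S -> smith_comm R S.
Proof.
intros hR hS H. pose proof H as [_ [_ T]].
apply (c2_iff hR hS) in H.
exists (RxS_sub hR hS).
exists (fun t : sub_sb (RxS_sub hR hS) =>
  sb_add (sb_add (fst (fst (proj1_sig t))) (sb_addinv (snd (fst (proj1_sig t)))))
         (snd (proj1_sig t))).
split; [|split].
- intros [[[x y] z] [Hxy Hyz]] [[[x' y'] z'] [Hxy' Hyz']]. simpl in *. split.
  + rewrite addinvD.
    assert (C := proj1 (H _ _ (I_addl hR Hxy') (I_addr hS Hyz))).
    transitivity (sb_add x (sb_add (sb_add (sb_add x' (sb_addinv y'))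
                                         (sb_add (sb_addinv y) z)) z')).
    { rewrite !sb_addA. reflexivity. }
    rewrite C. rewrite !sb_addA. reflexivity.
  + rewrite (T _ _ _ (c_mul hR Hxy Hxy') (c_mul hS Hyz Hyz')), (T _ _ _ Hxy Hyz), (T _ _ _ Hxy' Hyz').
    rewrite mulinvM.
    assert (C := proj1 (proj2 (H _ _ (I_mull hR Hxy') (I_mulr hS Hyz)))).
    transitivity (sb_mul x (sb_mul (sb_mul (sb_mul x' (sb_mulinv y'))
                                         (sb_mul (sb_mulinv y) z)) z')).
    { rewrite !sb_mulA. reflexivity. }
    rewrite C. rewrite !sb_mulA. reflexivity.
- intros [[[x y] z] Ht]. simpl. intros ->. rewrite <- sb_addA, sb_addVl, sb_add1r. reflexivity.
- intros [[[x y] z] Ht]. simpl. intros ->. rewrite sb_addVr, sb_add1l. reflexivity.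
Qed.

Lemma smith_c2 (X : skew_brace) (R S : X -> X -> Prop) :
  congruence R -> congruence S -> smith_comm R S -> cond2' R S.
Proof.
intros hR hS [h [p [hom [b1 b2]]]] a b Ha Hb.
assert (M1 : RxS R S ((a, sb_one), sb_one)) by (split; [exact Ha | apply c_refl; auto]).
assert (M2 : RxS R S ((sb_one, sb_one), b)) by (split; [apply c_refl; auto | apply c_sym; auto]).
set (t1 := exist _ _ M1 : sub_sb h).
set (t2 := exist _ _ M2 : sub_sb h).
assert (P1 : p t1 = a) by (apply b1; reflexivity).
assert (P2 : p t2 = b) by (apply b2; reflexivity).
assert (E1 : sb_add t1 t2 = sb_add t2 t1).
{ apply sig_eq_val; simpl. rewrite !sb_add1l, !sb_add1r. reflexivity. }
assert (E2 : sb_mul t1 t2 = sb_mul t2 t1).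
{ apply sig_eq_val; simpl. rewrite !sb_mul1l, !sb_mul1r. reflexivity. }
assert (E3 : sb_add t1 t2 = sb_mul t1 t2).
{ apply sig_eq_val; simpl. rewrite !sb_mul1l, !sb_mul1r, !sb_add1l, !sb_add1r. reflexivity. }
rewrite <- P1, <- P2, <- !(proj1 (hom _ _)), <- !(proj2 (hom _ _)).
split; [f_equal; exact E1 | split; f_equal; [exact E2 | exact E3]].
Qed.

Theorem proposition3p10 (X : skew_brace) (R S : X -> X -> Prop)
  (hR : congruence R) (hS : congruence S) :
  (huq_comm (I_of R) (I_of S) <-> cond2 R S) /\
  (cond2 R S <-> smith_comm R S) /\
  huq_eq_smith.
Proof.
split; [|split].
- split; intro H. apply (c2_iff hR hS), (huq_iff hR hS), H. apply (huq_iff hR hS), (c2_iff hR hS), H.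
- split. apply c2_smith; auto.
  intro H. apply (c2_iff hR hS). apply smith_c2; auto.
- intros Y R' S' hR' hS' H. apply c2_smith; auto.
  apply (c2_iff hR' hS'). apply (huq_iff hR' hS'). exact H.
Qed.
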